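(* Let $\lambda$ be a partition of $n$, let $t=\lambda_2-1$ and $s=\lambda_1-1$, and for $1\le k\le t$ let $b_k=\lambda'_1+\cdots+\lambda'_k-k+1$ (the entry in the top cell of column $k$ of the regular filling). Then $\mathcal{I}_\lambda$ is generated by the union of the following sets: (column 0) $e_1(n),\dots,e_{\ell(\lambda)-1}(n)$ (here $\ell(\lambda)=\lambda'_1=b_1$); (column $k$, for each $1\le k\le t$) $e_{b_k}(n-k)$; (last column, only if $s>t$) $e_{n-s}(n-s)$, i.e. all square-free monomials of degree $n-s$. Moreover, the same remains a generating set if the set $e_{b_1}(n-1)$ is replaced by $\{x_1^{b_1},\dots,x_n^{b_1}\}$. If $\lambda=(1^n)$ is the one-column partition, one also adds the element $e_n(n)=x_1\cdots x_n$ to this generating set; if $\lambda=(n)$ is the one-row partition, $\mathcal{I}_{(n)}=(x_1,\dots,x_n)$.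
   Context: $k$ is a field of characteristic $0$ and $R=k[x_1,\dots,x_n]$. For a set $S$ of variables, $e_r(S)$ is the $r$-th elementary symmetric polynomial in the variables of $S$ ($e_0=1$, and $e_r(S)=0$ if $r>|S|$). For $1\le m\le n$, $e_r(m)$ denotes the set $\{e_r(S): S\subseteq\{x_1,\dots,x_n\},\ |S|=m\}$. A partition $\lambda=(\lambda_1\ge\lambda_2\ge\cdots)$ of $n$ (with $\lambda_i=0$ beyond its length) has length $\ell(\lambda)$ and conjugate $\lambda'$ with $\lambda'_i=\#\{j:\lambda_j\ge i\}$. The Young diagram of $\lambda$ is drawn with rows counted from the bottom (bottom row of length $\lambda_1$), left-justified; columns are numbered $0,1,\dots,\lambda_1-1$ from left to right, column $c$ having height $\lambda'_{c+1}$. For $1\le m\le n$ put $\delta_m(\lambda)=\lambda'_n+\cdots+\lambda'_{n-m+1}$ (with $\lambda'_i=0$ for $i>\lambda_1$). The De Concini–Procesi ideal $\mathcal{I}_\lambda\subseteq R$ is the ideal generated by all elements of the sets $e_r(m)$ with $1\le m\le n$ and $m\ge r>m-\delta_m(\lambda)$. The regular filling of $\lambda$: for each column $c$, the bottom cell of column $c$ receives $n-c$, and the remaining $\lambda'_{c+1}-1$ cells of column $c$ receive, from top to bottom, the consecutive integers $1+\sum_{d<c}(\lambda'_{d+1}-1),\dots,\sum_{d\le c}(\lambda'_{d+1}-1)$. *)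

(* Defs.v *)
From HB Require Import structures.
From mathcomp Require Import all_boot all_order all_algebra.
From mathcomp Require Import mpoly.
Set Implicit Arguments. Unset Strict Implicit. Unset Printing Implicit Defensive.
Import GRing.Theory.
Local Open Scope ring_scope.

Definition in_ideal (k : fieldType) (n : nat) (G : {mpoly k[n]} -> Prop)
  (p : {mpoly k[n]}) : Prop :=
  exists l : seq ({mpoly k[n]} * {mpoly k[n]}),
    (forall q, q \in l -> G q.2) /\ p = \sum_(q <- l) q.1 * q.2.

Definition esymS (k : fieldType) (n : nat) (S : {set 'I_n}) (r : nat)
  : {mpoly k[n]} :=
  \sum_(T : {set 'I_n} | (T \subset S) && (#|T| == r)) \prod_(i in T) 'X_i.

Definition is_partition (n : nat) (la : seq nat) : bool :=
  [&& sorted geq la, all (fun x => 0 < x) la & sumn la == n]%N.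

(* lambda_i (1-indexed, 0 beyond the length) *)
Definition part (la : seq nat) (i : nat) : nat := nth 0%N la i.-1.

Definition conjp (la : seq nat) (i : nat) : nat :=
  count (fun x => i <= x)%N la.

Definition delta (n : nat) (la : seq nat) (m : nat) : nat :=
  (\sum_(n - m + 1 <= i < n + 1) conjp la i)%N.

(* Generators of the De Concini--Procesi ideal:
   e_r(S), |S| = m, 1 <= m <= n, m >= r > m - delta_m(lambda)
   (the last condition written as m < r + delta_m, exactly in integers). *)
Definition DP_gens (k : fieldType) (n : nat) (la : seq nat)
  (p : {mpoly k[n]}) : Prop :=
  exists (m r : nat) (S : {set 'I_n}),
    [/\ (1 <= m <= n)%N, #|S| = m, (r <= m)%N, (m < r + delta n la m)%N
      & p = esymS k S r].

Definition bcol (la : seq nat) (kk : nat) : nat :=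
  ((\sum_(1 <= i < kk.+1) conjp la i) + 1 - kk)%N.

(* The generating set of the theorem.  t = lambda_2 - 1, s = lambda_1 - 1;
   "1 <= k <= t" is written (1 <= k < lambda_2), "s > t" is lambda_2 < lambda_1.
   If [repl] is true, the set e_{b_1}(n-1) is replaced by {x_i^{b_1}}. *)
Definition thm_gens (k : fieldType) (n : nat) (la : seq nat) (repl : bool)
  (p : {mpoly k[n]}) : Prop :=
  (exists r : nat, (1 <= r < size la)%N /\ p = esymS k [set: 'I_n] r)
  \/ (exists (kk : nat) (S : {set 'I_n}),
        [/\ (1 <= kk < part la 2)%N, ~~ (repl && (kk == 1%N)),
            #|S| = (n - kk)%N & p = esymS k S (bcol la kk)])
  \/ (repl /\ (1 < part la 2)%N /\ exists i : 'I_n, p = 'X_i ^+ bcol la 1)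
  \/ ((part la 2 < part la 1)%N /\
      exists S : {set 'I_n}, #|S| = (n - (part la 1 - 1))%N /\
        p = esymS k S (n - (part la 1 - 1))%N)
  \/ (la = nseq n 1%N /\ p = esymS k [set: 'I_n] n).

(* Main.v *)
Require Import Defs.
From HB Require Import structures.
From mathcomp Require Import all_boot all_order all_algebra.
From mathcomp Require Import mpoly.
From mathcomp Require Import zify ring.
Set Implicit Arguments. Unset Strict Implicit. Unset Printing Implicit Defensive.
Import GRing.Theory.

Definition FF (la : seq nat) (kk : nat) : nat := \sum_(x <- la) minn x kk.

Lemma FF_cons x s kk : FF (x :: s) kk = minn x kk + FF s kk.
Proof. by rewrite /FF big_cons. Qed.

Lemma FF_nil kk : FF [::] kk = 0.
Proof. by rewrite /FF big_nil. Qed.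

Lemma FF_S s kk : FF s kk.+1 = FF s kk + conjp s kk.+1.
Proof.
rewrite /conjp; elim: s => [|x s IH]; first by rewrite !FF_nil.
rewrite !FF_cons IH /=; case: (leqP kk.+1 x) => H /=; lia.
Qed.

Lemma F_eq s kk : (\sum_(1 <= i < kk.+1) conjp s i = FF s kk)%N.
Proof.
elim: kk => [|kk IH]; first by rewrite big_geq // /FF big1 // => x _; rewrite minn0.
by rewrite big_nat_recr //= IH FF_S.
Qed.

Lemma FF_mono s kk : (FF s kk <= FF s kk.+1)%N.
Proof. rewrite FF_S; lia. Qed.

Lemma FF_le s kk : (FF s kk <= sumn s)%N.
Proof. elim: s => [|x s IH]; rewrite ?FF_nil ?FF_cons //=; lia. Qed.

Lemma FF_full s kk : all (fun x => x <= kk)%N s -> FF s kk = sumn s.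
Proof.
elim: s => [|x s IH]; rewrite ?FF_nil ?FF_cons //= => /andP [xk /IH ->]; lia.
Qed.

Lemma FF0 s : FF s 0 = 0.
Proof. by elim: s => [|x s IH]; rewrite ?FF_nil ?FF_cons // IH minn0. Qed.

Lemma FF1 s : all (fun x => 0 < x)%N s -> FF s 1 = size s.
Proof.
elim: s => [|x s IH]; rewrite ?FF_nil ?FF_cons //= => /andP [x0 /IH ->]; lia.
Qed.

Lemma le_sumn s x : x \in s -> (x <= sumn s)%N.
Proof.
elim: s => [|y s IH] //=; rewrite inE => /orP [/eqP ->|/IH]; lia.
Qed.

Lemma delta_FF n la kk : (kk <= n)%N -> sumn la = n ->
  (delta n la (n - kk) + FF la kk = n)%N.
Proof.
move=> kn sn; rewrite /delta subKn // !addn1.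
have -> : FF la kk = (\sum_(1 <= i < kk.+1) conjp la i)%N by rewrite F_eq.
rewrite addnC -big_cat_nat; [|lia|lia].
rewrite F_eq FF_full ?sn //; apply/allP => x xl; rewrite -sn; exact: le_sumn.
Qed.

Section Part.
Variables (n : nat) (la : seq nat).
Hypothesis hn : (0 < n)%N.
Hypothesis hla : is_partition n la.

Let lam1 := part la 1.
Let lam2 := part la 2.

Lemma la_cons : exists a rest, la = a :: rest.
Proof.
case: la hla => [|a rest] H; last by exists a, rest.
move/and3P: H => [_ _ /eqP n0]; move: n0 hn => /= <-; by [].
Qed.

Lemma la_sum : sumn la = n.
Proof. by case/and3P: hla => _ _ /eqP. Qed.

Lemma la_pos : all (fun x => 0 < x)%N la.
Proof. by case/and3P: hla. Qed.

Lemma la_all1 : all (fun x => x <= lam1)%N la.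
Proof.
have [a [rest E]] := la_cons; rewrite /lam1 /part E /=.
case/and3P: hla; rewrite E /= => srt _ _; rewrite leqnn /=.
have := order_path_min _ srt; rewrite /=; apply => //.
by move=> x y z /= H1 H2; lia.
Qed.

Lemma la_all2 : all (fun x => x <= lam2)%N (behead la).
Proof.
have [a [rest E]] := la_cons; rewrite /lam2 /part E /=.
case: rest E => [|b rest] E //=; rewrite leqnn /=.
case/and3P: hla; rewrite E /= => /andP [_ srt] _ _.
have := order_path_min _ srt; rewrite /=; apply => //.
by move=> x y z /= H1 H2; lia.
Qed.

Lemma FF_split kk : FF la kk = minn lam1 kk + FF (behead la) kk.
Proof. have [a [rest E]] := la_cons; by rewrite /lam1 /part E FF_cons. Qed.

Lemma sum_split : n = (lam1 + sumn (behead la))%N.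
Proof. have [a [rest E]] := la_cons; by rewrite -la_sum /lam1 /part E. Qed.

Lemma lam1_pos : (0 < lam1)%N.
Proof. have [a [rest E]] := la_cons; have := la_pos; by rewrite /lam1 /part E /= => /andP []. Qed.

Lemma lam1_le : (lam1 <= n)%N.
Proof. have := sum_split; lia. Qed.

Lemma lam21 : (lam2 <= lam1)%N.
Proof.
have [a [rest E]] := la_cons; have := la_all1; rewrite /lam2 /part E /=.
case: rest E => [|b rest] E //= /and3P [_ H _]; exact: H.
Qed.

Lemma P_le kk : (FF la kk <= n)%N.
Proof. rewrite -la_sum; exact: FF_le. Qed.

Lemma P_lt kk : (kk < lam1)%N -> (FF la kk < n)%N.
Proof.
move=> kl; rewrite FF_split sum_split; have := FF_le (behead la) kk; lia.
Qed.

Lemma P_full kk : (lam1 <= kk)%N -> FF la kk = n.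
Proof.
move=> lk; rewrite -la_sum FF_full //; apply/allP => x /(allP la_all1); lia.
Qed.

Lemma P_mid kk : (lam2 <= kk)%N -> (FF la kk + lam1 = minn lam1 kk + n)%N.
Proof.
move=> lk; rewrite FF_split sum_split FF_full; first lia.
apply/allP => x /(allP la_all2); lia.
Qed.

Lemma P_two kk : (kk <= lam2)%N -> (2 * kk <= FF la kk)%N.
Proof.
have [a [rest E]] := la_cons; rewrite /lam2 /part E /= FF_cons.
case: rest E => [|b rest] E /=; first by move=> k0; have -> : kk = 0%N by lia.
rewrite FF_cons => kb; have := lam21; rewrite /lam1 /lam2 /part E /= => ba; lia.
Qed.

Lemma P_step kk : (kk < lam2)%N -> (FF la kk + 2 <= FF la kk.+1)%N.
Proof.
have [a [rest E]] := la_cons; rewrite /lam2 /part E /= !FF_cons.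
case: rest E => [|b rest] E /=; first by [].
rewrite !FF_cons => kb; have := lam21; rewrite /lam1 /lam2 /part E /= => ba.
have := FF_mono rest kk; lia.
Qed.

Lemma P_one : FF la 1 = size la.
Proof. exact: FF1 la_pos. Qed.

Lemma P_nseq : (lam1 <= 1)%N -> la = nseq n 1%N.
Proof.
move=> l1; have H : all (pred1 1%N) la.
  apply/allP => x xl; have := allP la_all1 x xl; have := allP la_pos x xl.
  rewrite /=; lia.
move/all_pred1P: (H) => E; rewrite E; congr nseq.
rewrite -la_sum E; elim: (size la) => //= m ->; lia.
Qed.
End Part.

Local Open Scope ring_scope.

Section Ideal.
Variables (k : fieldType) (n : nat) (G : {mpoly k[n]} -> Prop).
Notation I := (in_ideal G).

Lemma ideal0 : I 0.
Proof. by exists [::]; split => //; rewrite big_nil. Qed.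

Lemma ideal_gen g : G g -> I g.
Proof.
move=> Gg; exists [:: (1, g)]; split; first by move=> q; rewrite inE => /eqP ->.
by rewrite big_seq1 mul1r.
Qed.

Lemma idealD p q : I p -> I q -> I (p + q).
Proof.
move=> [l1 [H1 ->]] [l2 [H2 ->]]; exists (l1 ++ l2); split; last by rewrite big_cat.
by move=> x; rewrite mem_cat => /orP [] ?; [apply: H1 | apply: H2].
Qed.

Lemma idealMl a p : I p -> I (a * p).
Proof.
move=> [l [H ->]]; exists [seq (a * x.1, x.2) | x <- l]; split.
  move=> x /mapP [y yl ->]; exact: (H y yl).
by rewrite big_map mulr_sumr; apply: eq_bigr => x _; rewrite mulrA.
Qed.

Lemma idealN p : I p -> I (- p).
Proof. by move=> Ip; rewrite -mulN1r; apply: idealMl. Qed.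

Lemma idealB p q : I p -> I q -> I (p - q).
Proof. by move=> Ip Iq; apply: idealD => //; apply: idealN. Qed.

Lemma ideal_sum (T : Type) (s : seq T) (P : pred T) (F : T -> {mpoly k[n]}) :
  (forall x, P x -> I (F x)) -> I (\sum_(x <- s | P x) F x).
Proof.
move=> H; elim: s => [|x s IH]; first by rewrite big_nil; apply: ideal0.
rewrite big_cons; case: ifP => Px //; exact: idealD (H _ Px) IH.
Qed.

Lemma ideal_natr (c : nat) p : (c != 0)%N -> [pchar k] =i pred0 ->
  I (c%:R * p) -> I p.
Proof.
move=> c0 hk Ip.
have cz : (c%:R : k) != 0 by move/pcharf0P: hk => ->.
have -> : p = ((c%:R : k)^-1)%:MP * (c%:R * p).
  rewrite mulrA -(rmorph_nat (@mpolyC n k) c).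
  by rewrite -rmorphM /= mulVf // mul1r.
exact: idealMl.
Qed.
End Ideal.

Lemma ideal_trans (k : fieldType) (n : nat) (G H : {mpoly k[n]} -> Prop) p :
  (forall g, G g -> in_ideal H g) -> in_ideal G p -> in_ideal H p.
Proof.
move=> GH [l [Hl ->]]; rewrite big_seq; apply: ideal_sum => x xl.
by apply: idealMl; apply: GH; apply: Hl.
Qed.

Section Esym.
Variables (k : fieldType) (n : nat).
Notation e := (@esymS k n).
Notation P := {mpoly k[n]}.

Lemma esym0 (S : {set 'I_n}) : e S 0 = 1.
Proof.
rewrite /esymS (big_pred1 set0) ?big_set0 // => T /=.
rewrite cards_eq0 andbC; case: eqP => [->|] //=; by rewrite sub0set.
Qed.

Lemma esym_big (S : {set 'I_n}) r : (#|S| < r)%N -> e S r = 0.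
Proof.
move=> Sr; rewrite /esymS big_pred0 // => T.
apply/negP => /andP [TS /eqP Tr]; have := subset_leq_card TS; lia.
Qed.

Lemma esym_top (S : {set 'I_n}) : e S #|S| = \prod_(i in S) 'X_i.
Proof.
rewrite /esymS (big_pred1 S) // => T /=.
apply/andP/eqP => [[TS /eqP TSc]|->]; last by rewrite subxx.
by apply/eqP; rewrite eqEcard TS TSc leqnn.
Qed.

Lemma subU1_eq (T S : {set 'I_n}) i : i \notin T -> i \notin S ->
  (i |: T \subset i |: S) = (T \subset S).
Proof.
move=> iT iS; apply/subsetP/subsetP => H x xT.
  have := H x; rewrite !in_setU1 xT orbT => /(_ isT) /orP [/eqP xi|//].
  by move: iT; rewrite -xi xT.
rewrite !in_setU1 in xT *; case/orP: xT => [->//|/H ->]; by rewrite orbT.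
Qed.

Lemma esym_with i (S : {set 'I_n}) r : i \notin S ->
  \sum_(T : {set 'I_n} | (T \subset i |: S) && (#|T| == r.+1) && (i \in T))
     \prod_(j in T) ('X_j : P) = 'X_i * e S r.
Proof.
move=> iS; rewrite (reindex_onto (fun T => i |: T) (fun T => T :\ i)); last first.
  by move=> T /andP [_ iT]; rewrite setD1K.
rewrite /esymS mulr_sumr; apply: eq_big => T.
  rewrite setU11 andbT; case iT: (i \in T).
    have -> : i |: T = T by apply/setUidPr; rewrite sub1set.
    rewrite eqEsubset subD1set /=.
    have F1 : (T \subset T :\ i) = false.
      by apply/negP => /subsetP/(_ i iT); rewrite setD11.
    have F2 : (T \subset S) = false.
      by apply/negP => /subsetP/(_ i iT); rewrite (negbTE iS).
    by rewrite F1 F2 andbF.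
  by rewrite setU1K ?iT // eqxx andbT subU1_eq ?iT // cardsU1 iT.
move=> /andP [_ /eqP E]; have iT : i \notin T by rewrite -E setD11.
by rewrite big_setU1.
Qed.
Lemma sub_notin (T S : {set 'I_n}) i : i \notin T ->
  (T \subset i |: S) = (T \subset S).
Proof.
move=> iT; apply/subsetP/subsetP => H x xT; last by rewrite in_setU1 H ?orbT.
have := H x xT; rewrite in_setU1 => /orP [/eqP xi|//].
by move: iT; rewrite -xi xT.
Qed.

Lemma esymR1 i (S : {set 'I_n}) r : i \notin S ->
  e (i |: S) r.+1 = e S r.+1 + 'X_i * e S r.
Proof.
move=> iS; rewrite {1}/esymS (bigID [pred T : {set 'I_n} | i \in T]) /= addrC esym_with //.
congr (_ + _); apply: eq_bigl => T.
case iT: (i \in T); rewrite ?andbF ?andbT.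
  apply/esym/negP => /andP [/subsetP TS _]; by move: iS; rewrite TS.
by rewrite sub_notin ?iT.
Qed.

Lemma esym_sum_X (A : {set 'I_n}) r :
  \sum_(i in A) 'X_i * e (A :\ i) r = r.+1%:R * e A r.+1.
Proof.
transitivity (\sum_(i in A) \sum_(T : {set 'I_n} | (T \subset A) &&
      (#|T| == r.+1) && (i \in T)) \prod_(j in T) ('X_j : P)).
  apply: eq_bigr => i iA; rewrite -esym_with ?setD11 //.
  by rewrite setD1K.
rewrite (exchange_big_dep (fun T : {set 'I_n} => (T \subset A) && (#|T| == r.+1)));
  last by move=> i T _ /andP [].
rewrite /esymS mulr_sumr; apply: eq_bigr => T /andP [TA /eqP Tr].
rewrite (eq_bigl (fun i => i \in T)); last first.
  move=> i /=; rewrite TA Tr eqxx /=.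
  by case iT: (i \in T); rewrite ?andbF ?andbT // (subsetP TA).
by rewrite sumr_const Tr mulr_natl.
Qed.
Lemma exists_subset (T : {set 'I_n}) q : (q <= #|T|)%N ->
  exists U : {set 'I_n}, U \subset T /\ #|U| = q.
Proof.
move=> qT; exists [set x in take q (enum T)]; split.
  by apply/subsetP => x; rewrite inE => /mem_take; rewrite mem_enum.
rewrite cardsE; move/card_uniqP: (take_uniq q (enum_uniq (mem T))) => ->.
by rewrite size_takel // -cardE.
Qed.

Lemma esym_mono (G : P -> Prop) q r (S : {set 'I_n}) : (q <= r)%N ->
  (forall U : {set 'I_n}, #|U| = q -> in_ideal G (\prod_(j in U) 'X_j)) ->
  in_ideal G (e S r).
Proof.
move=> qr HU; rewrite /esymS; apply: ideal_sum => T /andP [_ /eqP Tr].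
have [U [UT Uq]] : exists U : {set 'I_n}, U \subset T /\ #|U| = q.
  by apply: exists_subset; rewrite Tr.
rewrite (big_setID U) /= (setIidPr UT) mulrC; apply: idealMl; exact: HU.
Qed.

Lemma esym_set1 i : e [set i] 1 = 'X_i.
Proof. by rewrite -(cards1 i) esym_top big_set1. Qed.
End Esym.

Section Core.
Variables (k : fieldType) (n : nat) (G : {mpoly k[n]} -> Prop).
Hypothesis hk : [pchar k] =i pred0.
Hypothesis hn : (0 < n)%N.
Notation I := (in_ideal G).
Notation e := (@esymS k n).

Lemma card_setT_n (T : {set 'I_n}) : #|T| = n -> T = setT.
Proof. by move=> Tn; apply/eqP; rewrite eqEcard subsetT cardsT card_ord Tn leqnn. Qed.

Lemma card_setD1 (i : 'I_n) : #|[set: 'I_n] :\ i| = n.-1.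
Proof. have := cardsD1 i [set: 'I_n]; rewrite cardsT card_ord in_setT /= => E; by rewrite [in RHS]E add1n. Qed.

Lemma card_n1 (S : {set 'I_n}) : #|S| = n.-1 -> exists i, S = [set: 'I_n] :\ i.
Proof.
move=> Sn; have : #|~: S| == 1%N.
  by have := cardsC S; rewrite card_ord Sn => E; apply/eqP; lia.
move/cards1P => [i Ei]; exists i; apply/setP => x.
by rewrite in_setD1 in_setT andbT -[x \in S]negbK -in_setC Ei in_set1.
Qed.

Lemma level_step m r (S : {set 'I_n}) : #|S| = m -> (m < n)%N ->
  (forall T : {set 'I_n}, #|T| = m.+1 -> I (e T r.+1)) ->
  I (e S r) -> I (e S r.+1).
Proof.
move=> Sm mn HT HS.
have H : \sum_(y in ~: S) e (y |: S) r.+1 =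
    #|~: S|%:R * e S r.+1 + (\sum_(y in ~: S) 'X_y) * e S r.
  rewrite mulr_suml mulr_natl -sumr_const -big_split /=.
  by apply: eq_bigr => y; rewrite in_setC => yS; rewrite esymR1.
apply: (@ideal_natr _ _ _ #|~: S|) => //.
  by have := cardsC S; rewrite card_ord Sm => E; apply/eqP; lia.
have -> : #|~: S|%:R * e S r.+1 =
   \sum_(y in ~: S) e (y |: S) r.+1 - (\sum_(y in ~: S) 'X_y) * e S r.
  by rewrite H addrK.
apply: idealB; last exact: idealMl.
apply: ideal_sum => y; rewrite in_setC => yS; apply: HT.
by rewrite cardsU1 yS Sm.
Qed.

Lemma sum_levels1 r :
  \sum_(i in [set: 'I_n]) e ([set: 'I_n] :\ i) r.+1 + r.+1%:R * e [set: 'I_n] r.+1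
  = n%:R * e [set: 'I_n] r.+1.
Proof.
rewrite -esym_sum_X -big_split /=.
have -> : n%:R * e [set: 'I_n] r.+1 = \sum_(i in [set: 'I_n]) e [set: 'I_n] r.+1.
  by rewrite sumr_const cardsT card_ord mulr_natl.
apply: eq_bigr => i _; rewrite -esymR1 ?setD11 //.
by rewrite setD1K ?in_setT.
Qed.

Lemma cong_lemma (i : 'I_n) r :
  (forall j, (0 < j <= r)%N -> I (e [set: 'I_n] j)) ->
  I (e ([set: 'I_n] :\ i) r - (- 'X_i) ^+ r).
Proof.
elim: r => [|r IH] H; first by rewrite esym0 expr0 subrr; apply: ideal0.
have E := @esymR1 k n i _ r (negbT (setD11 i [set: 'I_n])); rewrite setD1K ?in_setT // in E.
have -> : e ([set: 'I_n] :\ i) r.+1 - (- 'X_i) ^+ r.+1 =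
   e [set: 'I_n] r.+1 - 'X_i * (e ([set: 'I_n] :\ i) r - (- 'X_i) ^+ r).
  rewrite E exprS; ring.
apply: idealB; first by apply: H; lia.
apply: idealMl; apply: IH => j jr; apply: H; lia.
Qed.

Lemma level01 l :
  (0 < l)%N ->
  (forall r, (0 < r < l)%N -> I (e [set: 'I_n] r)) ->
  I (e [set: 'I_n] l) ->
  (forall S : {set 'I_n}, #|S| = n.-1 -> I (e S l)) ->
  forall r, (0 < r)%N -> I (e [set: 'I_n] r).
Proof.
move=> l0 H0 Hl H1.
suff : forall d, I (e [set: 'I_n] (l + d)) /\
    forall S : {set 'I_n}, #|S| = n.-1 -> I (e S (l + d)).
  move=> Hd r r0; case: (ltnP r l) => rl; first by apply: H0; lia.
  by have [+ _] := Hd (r - l)%N; rewrite subnKC.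
elim=> [|d [IH1 IH2]]; first by rewrite addn0.
have E1 : I (e [set: 'I_n] (l + d.+1)).
  rewrite addnS; apply: (@ideal_natr _ _ _ (l + d).+1) => //.
  rewrite -esym_sum_X; apply: ideal_sum => i _; apply: idealMl; apply: IH2.
  exact: card_setD1.
split => // S Sn; rewrite addnS; apply: (@level_step n.-1) => //; first lia.
move=> T; rewrite prednK // => /card_setT_n ->; by rewrite -addnS.
exact: IH2.
Qed.

Lemma level_all (lam2 : nat) (b : nat -> nat) :
  (lam2 <= n)%N -> b 0%N = 1%N ->
  (forall kk, (kk.+1 < lam2)%N -> (b kk <= b kk.+1)%N) ->
  (forall r, (0 < r)%N -> I (e [set: 'I_n] r)) ->
  (forall kk, (1 <= kk < lam2)%N -> forall S : {set 'I_n}, #|S| = (n - kk)%N ->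
      I (e S (b kk))) ->
  forall kk, (kk < lam2)%N -> forall S : {set 'I_n}, #|S| = (n - kk)%N ->
    forall r, (b kk <= r)%N -> I (e S r).
Proof.
move=> l2n b0 bm H0 Hg; elim=> [|kk IH] kl S Sn r br.
  rewrite subn0 in Sn; rewrite (card_setT_n Sn); apply: H0; lia.
rewrite -(subnKC br); elim: (r - b kk.+1)%N => [|d IHd].
  by rewrite addn0; apply: Hg => //; lia.
rewrite addnS; apply: (@level_step (n - kk.+1)) => //; first lia.
move=> T Tn; apply: IH; first lia.
  by rewrite Tn; lia.
have := bm kk kl; lia.
Qed.
End Core.

Section Main.
Variables (k : fieldType) (n : nat) (la : seq nat).
Hypothesis hk : [pchar k] =i pred0.
Hypothesis hn : (0 < n)%N.
Hypothesis hla : is_partition n la.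
Notation e := (@esymS k n).
Notation lam1 := (part la 1).
Notation lam2 := (part la 2).
Notation l := (size la).

Lemma bcolE kk : bcol la kk = (FF la kk + 1 - kk)%N.
Proof. by rewrite /bcol F_eq. Qed.

Lemma bcol1 : bcol la 1 = l.
Proof. by rewrite bcolE (P_one hla) addnK. Qed.

Lemma l_le : (l <= n)%N.
Proof. rewrite -(P_one hla); exact: P_le. Qed.

Lemma l_pos : (0 < l)%N.
Proof. have [a [rest ->]] := la_cons hn hla; by []. Qed.

Lemma delta_n : delta n la n = n.
Proof. have := @delta_FF n la 0 (leq0n n) (la_sum hla); rewrite subn0 FF0; lia. Qed.

Notation DP := (in_ideal (@DP_gens k n la)).

Lemma colk_DP kk (S : {set 'I_n}) : (1 <= kk < lam2)%N -> #|S| = (n - kk)%N ->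
  @DP_gens k n la (e S (bcol la kk)).
Proof.
move=> kl Sn; have l21 := lam21 hn hla; have l1n := lam1_le hn hla.
have Hlt := P_lt hn hla (_ : (kk < lam1)%N); have H2 := P_two hn hla (_ : (kk <= lam2)%N).
have D := @delta_FF n la kk (_ : (kk <= n)%N) (la_sum hla).
have Hlt' := Hlt ltac:(lia); have H2' := H2 ltac:(lia); have D' := D ltac:(lia).
exists (n - kk)%N, (bcol la kk), S; split => //; rewrite ?bcolE; lia.
Qed.

Lemma col0_DP r : (0 < r <= n)%N -> @DP_gens k n la (e [set: 'I_n] r).
Proof.
move=> rn; exists n, r, [set: 'I_n]; split => //; rewrite ?cardsT ?card_ord ?delta_n //; lia.
Qed.

Lemma thm_to_DP repl g : @thm_gens k n la repl g -> DP g.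
Proof.
case=> [[r [rl ->]]|[[kk [S [kl _ Sn ->]]]|[[rp [l2 [i ->]]]|[[l21 [S [Sn ->]]]|[E ->]]]]].
- apply: ideal_gen; apply: col0_DP; have := l_le; lia.
- by apply: ideal_gen; apply: colk_DP.
- rewrite bcol1.
  have HC' : DP (e ([set: 'I_n] :\ i) l - (- 'X_i) ^+ l).
    apply: cong_lemma => // j jl; apply: ideal_gen; apply: col0_DP.
    have := l_le; lia.
  have HS : DP (e ([set: 'I_n] :\ i) l).
    apply: ideal_gen; rewrite -bcol1; apply: colk_DP; first lia.
    rewrite card_setD1; lia.
  have HX : DP ((- 'X_i) ^+ l).
    have -> : (- 'X_i) ^+ l = e ([set: 'I_n] :\ i) l -
        (e ([set: 'I_n] :\ i) l - (- 'X_i) ^+ l) by ring.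
    exact: idealB.
  rewrite -(signrMK l ('X_i ^+ l)) -exprNn; exact: idealMl.
- apply: ideal_gen; set q := (n - (lam1 - 1))%N.
  have l1n := lam1_le hn hla; have l1p := lam1_pos hn hla.
  have Hlt := P_lt hn hla (_ : (lam1 - 1 < lam1)%N).
  have D := @delta_FF n la (lam1 - 1) (_ : (lam1 - 1 <= n)%N) (la_sum hla).
  have Hlt' := Hlt ltac:(lia); have D' := D ltac:(lia).
  exists q, q, S; split => //; rewrite /q; lia.
- apply: ideal_gen; apply: col0_DP; lia.
Qed.
Section Dir.
Variable repl : bool.
Notation J := (in_ideal (@thm_gens k n la repl)).

Lemma gens0 r : (0 < r < l)%N -> J (e [set: 'I_n] r).
Proof. by move=> rl; apply: ideal_gen; left; exists r. Qed.

Lemma lastcol r (S : {set 'I_n}) : (lam2 < lam1)%N -> (n - (lam1 - 1) <= r)%N ->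
  J (e S r).
Proof.
move=> l21 qr; apply: (esym_mono S qr) => U Uq; rewrite -esym_top Uq.
by apply: ideal_gen; right; right; right; left; split => //; exists U.
Qed.

Lemma lev1 : (1 < lam2)%N -> J (e [set: 'I_n] l) /\
  forall S : {set 'I_n}, #|S| = n.-1 -> J (e S l).
Proof.
move=> l2.
have l1n : (l < n)%N.
  rewrite -(P_one hla); apply: P_lt => //; have := lam21 hn hla; lia.
have [l' El] : exists l', l = l'.+1 by have := l_pos; case: (size la) => // l' _; exists l'.
have Sm := @sum_levels1 k n l'; rewrite -El in Sm.
have [Hr|Hr] : repl \/ ~~ repl by case: repl; [left|right].
  have HD : forall i : 'I_n, J (e ([set: 'I_n] :\ i) l - e [set: 'I_n] l).
    move=> i.
    have HC : J (e ([set: 'I_n] :\ i) l' - (- 'X_i) ^+ l').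
      apply: cong_lemma => // j jl; apply: gens0; lia.
    have HX : J ('X_i ^+ l).
      apply: ideal_gen; right; right; left; split => //; split => //.
      by exists i; rewrite bcol1.
    have E := @esymR1 k n i _ l' (negbT (setD11 i [set: 'I_n])).
    rewrite setD1K ?in_setT // -El in E.
    have -> : e ([set: 'I_n] :\ i) l - e [set: 'I_n] l =
      - 'X_i * (e ([set: 'I_n] :\ i) l' - (- 'X_i) ^+ l') + (-1) ^+ l * 'X_i ^+ l.
      by rewrite E El -exprNn exprS opprD addrA subrr add0r mulrBr subrK mulNr.
    by apply: idealD; apply: idealMl.
  have He : J (e [set: 'I_n] l).
    apply: (@ideal_natr _ _ _ l) => //; first by rewrite El.
    have -> : l%:R * e [set: 'I_n] l =
        - \sum_(i in [set: 'I_n]) (e ([set: 'I_n] :\ i) l - e [set: 'I_n] l).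
      move: Sm; rewrite [n%:R * _]mulr_natl => Sm.
      by rewrite sumrB sumr_const cardsT card_ord -Sm opprB [_ + l%:R * _]addrC addrK.
    by apply: idealN; apply: ideal_sum => i _; apply: HD.
  split => // S /(card_n1 hn) [i ->].
  have -> : e ([set: 'I_n] :\ i) l =
    (e ([set: 'I_n] :\ i) l - e [set: 'I_n] l) + e [set: 'I_n] l by rewrite subrK.
  by apply: idealD.
have H1 : forall S : {set 'I_n}, #|S| = n.-1 -> J (e S l).
  move=> S Sn; apply: ideal_gen; right; left; exists 1%N, S; split => //.
    by rewrite (negbTE Hr).
    by rewrite Sn subn1.
  by rewrite bcol1.
split => //.
apply: (@ideal_natr _ _ _ (n - l)) => //; first by rewrite subn_eq0 -ltnNge.
have -> : (n - l)%:R * e [set: 'I_n] l =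
   \sum_(i in [set: 'I_n]) e ([set: 'I_n] :\ i) l.
  by rewrite (natrB _ (ltnW l1n)) mulrBl -Sm addrK.
apply: ideal_sum => i _; apply: H1; exact: card_setD1.
Qed.

Lemma L0 r : (0 < r)%N -> J (e [set: 'I_n] r).
Proof.
move=> r0; case: (ltnP 1 lam2) => l2.
  have [H1 H2] := lev1 l2.
  by apply: (level01 hk hn l_pos) => //; apply: gens0.
case: (ltnP r l) => rl; first by apply: gens0; lia.
case: (ltnP n r) => rn.
  by rewrite esym_big ?cardsT ?card_ord //; apply: ideal0.
have l1p := lam1_pos hn hla.
case: (ltnP lam2 lam1) => l21.
  apply: lastcol => //; have := P_mid hn hla l2; rewrite (P_one hla); lia.
have E := P_nseq hn hla (_ : (lam1 <= 1)%N); have E' := E ltac:(lia).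
have rE : r = n by move: rl; rewrite E' size_nseq; lia.
rewrite rE; apply: ideal_gen; right; right; right; right; split => //.
Qed.

Lemma levels kk : (kk < lam2)%N -> forall S : {set 'I_n}, #|S| = (n - kk)%N ->
    forall r, (bcol la kk <= r)%N -> J (e S r).
Proof.
apply: (level_all hk hn (lam2:=lam2) (b:=bcol la)).
- have := lam21 hn hla; have := lam1_le hn hla; lia.
- by rewrite bcolE FF0.
- move=> kk' kl; rewrite !bcolE; have := P_step hn hla (_ : (kk' < lam2)%N).
  move=> /(_ ltac:(lia)); have := P_two hn hla (_ : (kk' <= lam2)%N).
  move=> /(_ ltac:(lia)); lia.
- exact: L0.
- move=> kk' kl S Sn; case E: (repl && (kk' == 1%N)).
    case/andP: E => _ /eqP Ek; subst kk'.
    have [_ H2] := lev1 ltac:(lia).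
    by rewrite bcol1; apply: H2; rewrite Sn subn1.
  by apply: ideal_gen; right; left; exists kk', S; rewrite E.
Qed.

Lemma DP_to_thm g : @DP_gens k n la g -> J g.
Proof.
case=> m [r [S [/andP [m1 mn] Sm rm cond ->]]].
set kk := (n - m)%N.
have mE : m = (n - kk)%N by rewrite /kk; lia.
have D := @delta_FF n la kk (_ : (kk <= n)%N) (la_sum hla).
have D' := D ltac:(rewrite /kk; lia); rewrite -mE in D'.
have Fle := P_le hla kk.
have Hc : (FF la kk < r + kk)%N by lia.
case: (posnP kk) => k0.
  rewrite k0 FF0 in Hc.
  have -> : S = [set: 'I_n] by apply: card_setT_n; lia.
  apply: L0; lia.
case: (ltnP kk lam2) => kl.
  apply: (levels kl); first by rewrite Sm.
  rewrite bcolE; lia.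
case: (ltnP kk lam1) => k1.
  have := P_mid hn hla kl; rewrite (minn_idPr (ltnW k1)) => Em.
  apply: lastcol; lia.
have := P_full hn hla k1; lia.
Qed.
End Dir.

End Main.

Lemma mono1 (k : fieldType) (n : nat) (S : {set 'I_n}) r : (0 < r)%N ->
  in_ideal (fun q : {mpoly k[n]} => exists i : 'I_n, q = 'X_i) (esymS k S r).
Proof.
move=> r0; apply: (esym_mono S r0) => U /eqP/cards1P [i ->].
by rewrite big_set1; apply: ideal_gen; exists i.
Qed.

Theorem mainTheorem5 (k : fieldType) (hk : [pchar k] =i pred0)
  (n : nat) (hn : (0 < n)%N) (la : seq nat) (hla : is_partition n la) :
  (forall repl : bool, forall p : {mpoly k[n]},
     in_ideal (@thm_gens k n la repl) p <-> in_ideal (@DP_gens k n la) p)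
  /\ (la = [:: n] -> forall p : {mpoly k[n]},
     in_ideal (@DP_gens k n la) p <-> in_ideal (fun q => exists i : 'I_n, q = 'X_i) p).
Proof.
have P1 : forall repl : bool, forall p : {mpoly k[n]},
     in_ideal (@thm_gens k n la repl) p <-> in_ideal (@DP_gens k n la) p.
  move=> repl p; split; apply: ideal_trans => g.
    exact: (thm_to_DP hn hla).
  exact: (DP_to_thm hk hn hla).
split => // E p; rewrite -(P1 false p); split; apply: ideal_trans => g.
  case=> [[r [rl ->]]|[[kk [S [kl _ Sn ->]]]|[[rp _]|[[l21 [S [Sn ->]]]|[_ ->]]]]] //.
  - apply: mono1; lia.
  - by move: kl; rewrite E /part /= ltn0 andbF.
  - apply: mono1; rewrite E /part /=; lia.
  - apply: mono1; lia.
move=> [i ->]; apply: ideal_gen; right; right; right; left.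
rewrite E /part /=; split => //; exists [set i]; rewrite cards1.
have -> : (n - (n - 1))%N = 1%N by lia.
by rewrite esym_set1.
Qed.
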